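(* Let $\ket{\psi}$ be an $n$-qubit pure state and let $\mathbf{z}\in\{0,1\}^n$ satisfy $p_\psi(\mathbf{z})>0$. Let $P$ be any partition of $[n]$ such that $\ket{\psi}=\bigotimes_{\alpha\in P}\ket{\psi_\alpha}$ for pure states $\ket{\psi_\alpha}$ on the qubits in $\alpha$. Then for every block $\alpha\in P$, the Hamming weight of the substring $\mathbf{z}_\alpha=(z_i)_{i\in\alpha}$ is even. Equivalently, $\ket{\psi}$ cannot be a product with respect to any partition having a block on which the restriction of $\mathbf{z}$ has odd Hamming weight.
   Context: Parallelized controlled-SWAP test: for an $n$-qubit state $\ket{\psi}$, take two copies $\ket{\psi}^{\otimes 2}$ and let $\mathbb{F}^{(i)}$ denote the swap operator exchanging the $i$-th qubit of the first copy with the $i$-th qubit of the second copy. The probability of the outcome bitstring $\mathbf{z}\in\{0,1\}^n$ is $p_\psi(\mathbf{z})=\mathrm{Tr}\big[\big(\bigotimes_{i=1}^n\tfrac12(\mathbb{1}+(-1)^{z_i}\mathbb{F}^{(i)})\big)(\ket{\psi}\!\bra{\psi})^{\otimes 2}\big]$. *)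

(* Defs.v *)
From HB Require Import structures.
From mathcomp Require Import all_boot all_order all_algebra.
Set Implicit Arguments. Unset Strict Implicit. Unset Printing Implicit Defensive.
Import Order.TTheory GRing.Theory Num.Theory.
Local Open Scope ring_scope.

Definition bits (n : nat) := {ffun 'I_n -> bool}.

Definition is_state (C : numClosedFieldType) (n : nat) (psi : bits n -> C) : Prop :=
  \sum_(x : bits n) `|psi x| ^+ 2 = 1.

(* local factor (qubit i) of the operator
   (x) _i 1/2 (1 + (-1)^{z_i} F^(i)) acting on two copies;
   matrix element <a| . |b>, a, b : basis of the two copies *)
Definition loc_proj (C : numClosedFieldType) (n : nat) (z : bits n) (i : 'I_n)
    (a b : bits n * bits n) : C :=
  2^-1 * (((a.1 i == b.1 i) && (a.2 i == b.2 i))%:R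
          + (-1) ^+ z i * ((a.1 i == b.2 i) && (a.2 i == b.1 i))%:R).

Definition proj_z (C : numClosedFieldType) (n : nat) (z : bits n)
    (a b : bits n * bits n) : C :=
  \prod_(i < n) loc_proj C z i a b.

Definition rho2 (C : numClosedFieldType) (n : nat) (psi : bits n -> C)
    (b a : bits n * bits n) : C :=
  psi b.1 * psi b.2 * (psi a.1 * psi a.2)^*.

Definition pswap (C : numClosedFieldType) (n : nat) (psi : bits n -> C) (z : bits n) : C :=
  \sum_(a : bits n * bits n) \sum_(b : bits n * bits n) proj_z C z a b * rho2 psi b a.

(* a state on the qubits of alpha, encoded as a function of the full string
   that depends only on the restriction to alpha, normalised over the
   assignments of the qubits in alpha *)
Definition is_local_state (C : numClosedFieldType) (n : nat) (alpha : {set 'I_n})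
    (phi : bits n -> C) : Prop :=
  (forall x y : bits n, {in alpha, forall i, x i = y i} -> phi x = phi y) /\
  \sum_(x : bits n | [forall i, (i \notin alpha) ==> ~~ x i]) `|phi x| ^+ 2 = 1.

Definition product_wrt (C : numClosedFieldType) (n : nat) (P : {set {set 'I_n}})
    (psi : bits n -> C) : Prop :=
  exists phi : {set 'I_n} -> bits n -> C,
    (forall alpha, alpha \in P -> is_local_state alpha (phi alpha)) /\
    (forall x : bits n, psi x = \prod_(alpha in P) phi alpha x).

Definition hw_on (n : nat) (z : bits n) (alpha : {set 'I_n}) : nat :=
  #|[set i in alpha | z i]|.

(* Main.v *)
Require Import Defs.
From HB Require Import structures.
From mathcomp Require Import all_boot all_order all_algebra.
From mathcomp Require Import ring.
Import Order.TTheory GRing.Theory Num.Theory.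
Local Open Scope ring_scope.

Definition swb (n : nat) (al : {set 'I_n}) (p : bits n * bits n) : bits n * bits n :=
  ([ffun i => if i \in al then p.2 i else p.1 i],
   [ffun i => if i \in al then p.1 i else p.2 i]).

Arguments swb {n}.

Lemma swbK n (al : {set 'I_n}) : involutive (swb al).
Proof.
case=> x y; rewrite /swb /=; congr pair; apply/ffunP=> i; rewrite !ffunE;
by case: (i \in al).
Qed.

Lemma loc_swb (C : numClosedFieldType) n (z : bits n) (al : {set 'I_n}) i a b :
  loc_proj C z i a (swb al b) =
  (if (i \in al) && z i then -1 else 1) * loc_proj C z i a b.
Proof.
rewrite /loc_proj /swb /= !ffunE.
case: (i \in al); case: (z i) => /=; rewrite ?expr1 ?expr0; ring.
Qed.

Lemma proj_swb (C : numClosedFieldType) n (z : bits n) (al : {set 'I_n}) a b :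
  proj_z C z a (swb al b) = (-1) ^+ hw_on z al * proj_z C z a b.
Proof.
rewrite /proj_z (eq_bigr _ (fun i _ => loc_swb C n z al i a b)) big_split /=.
congr (_ * _); rewrite -big_mkcond /= /hw_on -prodr_const.
by apply: eq_bigl => i; rewrite inE.
Qed.

Theorem proposition3 (C : numClosedFieldType) (n : nat) (psi : bits n -> C)
    (z : bits n) (P : {set {set 'I_n}}) :
  is_state psi ->
  0 < pswap psi z ->
  partition P [set: 'I_n] ->
  product_wrt P psi ->
  forall alpha, alpha \in P -> ~~ odd (hw_on z alpha).
Proof.
move=> _ hpos /and3P [_ hT _] [phi [hloc hpsi]] al hal.
apply/negP => hodd.
have hrho : forall b a, rho2 psi (swb al b) a = rho2 psi b a.
  move=> [x y] a; rewrite /rho2 /=; congr (_ * _).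
  rewrite !hpsi -!big_split /=; apply: eq_bigr => be hbe.
  case: (eqVneq be al) => [->|ne].
    have [hl _] := hloc al hal.
    rewrite mulrC; congr (_ * _); apply: hl => i hi; rewrite ffunE hi //.
  have [hl _] := hloc be hbe.
  have dj := trivIsetP hT be al hbe hal ne.
  congr (_ * _); apply: hl => i hi; rewrite ffunE (disjointFr dj hi) //.
have hsw : pswap psi z = - pswap psi z.
  rewrite {1}/pswap.
  under eq_bigr => a _ do rewrite (reindex_inj (inv_inj (swbK n al))) /=.
  under eq_bigr => a _ do under eq_bigr => b _ do
    rewrite (proj_swb C n) hrho -signr_odd hodd expr1 mulN1r mulNr.
  rewrite /pswap -sumrN; apply: eq_bigr => a _; by rewrite sumrN.
have h0 : pswap psi z = 0.
  have h2 : pswap psi z *+ 2 = 0 by rewrite mulr2n {1}hsw addNr.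
  by move/eqP: h2; rewrite mulrn_eq0 /= => /eqP.
by rewrite h0 ltxx in hpos.
Qed.
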